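(* Let $n\ge3$ and let $C_n=X(\mathbb{Z}_n,\{\pm1\})$ be the cycle graph on $n$ vertices. (i) If $n$ is odd, then $C_n$ does not admit perfect state transfer between distinct vertex type states. (ii) If $n=2l$ is even, then $C_n$ admits perfect state transfer from $d^*e_x$ to $d^*e_{x+l}$ (for every vertex $x$), and the minimum time at which it occurs is $l$.
   Context: For a graph with symmetric arc set $\mathcal{A}$ ($t((x,y))=y$, $(x,y)^{-1}=(y,x)$): boundary matrix $d_{x,a}=\frac{1}{\sqrt{\deg x}}\delta_{x,t(a)}$, shift matrix $R_{a,b}=\delta_{a,b^{-1}}$, Grover time evolution matrix $U=R(2d^*d-I_{\mathcal{A}})$; $e_x$ is the standard unit vector at vertex $x$ and $d^*e_x$ is a vertex type state. Perfect state transfer from a state $\Phi$ to a distinct state $\Psi$ at time $\tau\in\mathbb{Z}_{\ge1}$ means $U^\tau\Phi=\gamma\Psi$ for some $|\gamma|=1$. $X(\mathbb{Z}_n,S)$ denotes the circulant graph with vertex set $\mathbb{Z}_n$ and edges $\{x,y\}$ with $y-x\in S$. *)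

(* Defs.v *)
From HB Require Import structures.
From mathcomp Require Import all_boot all_order all_algebra algC.
Set Implicit Arguments. Unset Strict Implicit. Unset Printing Implicit Defensive.
Import Order.TTheory GRing.Theory Num.Theory.
Local Open Scope ring_scope.

Section Grover.
Variables (T : finType) (adj : rel T).

Definition arc := {p : T * T | adj p.1 p.2}.

Definition deg (x : T) : nat := #|[set y | adj x y]|.

Definition tv (a : arc) : T := (val a).2.

Definition bd (x : T) (a : arc) : algC :=
  if x == tv a then (sqrtC (deg x)%:R)^-1 else 0.

Definition shiftR (a b : arc) : algC :=
  (val a == ((val b).2, (val b).1))%:R.

Definition mxapply (M : arc -> arc -> algC) (v : arc -> algC) : arc -> algC :=
  fun a => \sum_b M a b * v b.

Definition coin (c b : arc) : algC :=
  2 * (\sum_x (bd x c)^* * bd x b) - (c == b)%:R.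

Definition Ugrover (a b : arc) : algC := \sum_c shiftR a c * coin c b.

Definition evolve (tau : nat) (Phi : arc -> algC) : arc -> algC :=
  iter tau (mxapply Ugrover) Phi.

(* vertex type state d^* e_x : (d^* e_x)(a) = conj (d_{x,a}) *)
Definition vstate (x : T) : arc -> algC := fun a => (bd x a)^*.

Definition PST (Phi Psi : arc -> algC) (tau : nat) : Prop :=
  (1 <= tau)%N /\
  exists gamma : algC, `|gamma| = 1 /\ forall a, evolve tau Phi a = gamma * Psi a.

End Grover.

Definition circulant (n : nat) (S : pred 'Z_n) : rel 'Z_n :=
  fun x y => (y - x) \in S.

Definition cycle_graph (n : nat) : rel 'Z_n :=
  circulant [pred s : 'Z_n | (s == 1) || (s == -1)].
Arguments circulant n S : clear implicits.
Arguments cycle_graph n : clear implicits.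
Arguments vstate {T} adj x.
Arguments PST {T adj} Phi Psi tau.
Arguments evolve {T adj} tau Phi.

(* Main.v *)
Require Import Defs.
From mathcomp Require Import all_boot all_order all_algebra algC.
From mathcomp Require Import ring zify.
Set Implicit Arguments. Unset Strict Implicit. Unset Printing Implicit Defensive.
Import Order.TTheory GRing.Theory Num.Theory.
Local Open Scope ring_scope.

Section Cyc.
Variable m : nat.
Local Notation N := m.+3.
Local Notation Z := 'Z_N.
Local Notation G := (cycle_graph N).
Local Notation A := (Defs.arc G).

Lemma adjE (u w : Z) : G u w = (w - u == 1) || (w - u == -1).
Proof. by []. Qed.

Lemma natZ0 k : ((k%:R : Z) == 0) = (N %| k)%N.
Proof.
by rewrite -val_eqE /= val_Zp_nat // /dvdn.
Qed.

Lemma two_neq0 : (2 : Z) != 0.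
Proof. by rewrite (natZ0 2); apply/negP => /(dvdn_leq (isT : (0 < 2)%N)). Qed.

Lemma one_neq_m1 : (1 : Z) != -1.
Proof.
apply: contraNneq two_neq0 => h.
by rewrite -[2]/(1 *+ 2) mulr2n {2}h subrr.
Qed.

Lemma deg2 (x : Z) : deg G x = 2%N.
Proof.
rewrite /deg; have -> : [set y | G x y] = [set x + 1; x - 1].
  apply/setP => y; rewrite !inE adjE.
  by rewrite !subr_eq ![_ + x]addrC.
rewrite cards2.
suff -> : (x + 1 != x - 1) by [].
by rewrite (can_eq (addKr x)) one_neq_m1.
Qed.

Lemma pm_neq (u : Z) : u + 1 != u - 1.
Proof. by rewrite (can_eq (addKr u)) one_neq_m1. Qed.

Definition k : algC := (sqrtC 2)^-1.

Lemma k_conj : k^* = k.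
Proof. by rewrite geC0_conj // invr_ge0 sqrtC_ge0 ler0n. Qed.

Lemma kk : 2 * (k * k) = 1.
Proof.
rewrite mulrC /k -expr2 exprVn sqrtCK mulVf //.
by rewrite pnatr_eq0.
Qed.

Lemma bdE (x : Z) (a : A) : bd x a = (x == tv a)%:R * k.
Proof. by rewrite /bd deg2; case: (x == tv a); rewrite ?mul1r ?mul0r. Qed.

Lemma coinE (c b : A) : coin c b = ((tv c == tv b) && (c != b))%:R.
Proof.
rewrite /coin (bigD1 (tv c)) //= big1 ?addr0; last first.
  by move=> x /negbTE hx; rewrite !bdE hx mul0r rmorph0 mul0r.
rewrite !bdE eqxx mul1r k_conj.
case: (eqVneq c b) => [->|ne]; first by rewrite !eqxx !mul1r kk subrr.
by case: (tv c == tv b); rewrite /= ?mul1r ?mul0r ?mulr0 ?subr0 ?kk.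
Qed.

Lemma adj_sym (u w : Z) : G u w -> G w u.
Proof.
by rewrite !adjE -[w - u]opprB !eqr_oppLR opprK orbC.
Qed.

Definition rev (a : A) : A := exist _ ((val a).2, (val a).1) (adj_sym (valP a)).

Lemma pred_adj (a : A) : G ((val a).1 - ((val a).2 - (val a).1)) (val a).1.
Proof.
rewrite adjE; have -> : (val a).1 - ((val a).1 - ((val a).2 - (val a).1)) = (val a).2 - (val a).1 by ring.
exact: (valP a).
Qed.

Definition predA (a : A) : A := @exist _ (fun p : Z * Z => G p.1 p.2) ((val a).1 - ((val a).2 - (val a).1), (val a).1) (pred_adj a).

Lemma UgroverE (a b : A) : Ugrover a b = coin (rev a) b.
Proof.
rewrite /Ugrover (bigD1 (rev a)) //= big1 ?addr0; last first.
  move=> c ne; rewrite /shiftR.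
  suff /negbTE -> : val a != ((val c).2, (val c).1) by rewrite mul0r.
  apply: contra ne => /eqP h; apply/eqP/val_inj => /=; rewrite h.
  by clear h; case: c => [[]].
rewrite /shiftR /=.
by case: a => [[u w] ha] /=; rewrite eqxx mul1r.
Qed.

Lemma pm_lemma (s t : Z) : (s == 1) || (s == -1) -> (t == 1) || (t == -1) ->
  (t == s) = ~~ (s == - t).
Proof.
move=> /orP[]/eqP-> /orP[]/eqP->;
  by rewrite ?opprK ?eqxx ?(negbTE one_neq_m1) ?(eq_sym (-1)) ?(negbTE one_neq_m1).
Qed.

Lemma Ugrover_delta (a b : A) : Ugrover a b = (b == predA a)%:R.
Proof.
rewrite UgroverE coinE; congr (_%:R); congr (nat_of_bool _).
case: a => [[u w] ha]; case: b => [[b1 b2] hb].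
have hs := ha; have ht := hb; rewrite /= !adjE in hs ht.
have [s ews] : exists s, w = u + s by exists (w - u); ring.
have [t ebt] : exists t, b1 = u - t by exists (u - b1); ring.
have ews' : w - u = s by rewrite ews; ring.
rewrite ews' in hs; rewrite /rev /predA /tv /=.
apply/idP/idP => [/andP[/eqP h1 h2]|/eqP e].
  subst b2.
  have ht' : u - b1 = t by rewrite ebt; ring.
  rewrite ht' in ht.
  have h2' : u + s != u - t.
    by apply: contra h2 => /eqP e; apply/eqP/val_inj; rewrite /= ews e ebt.
  rewrite (can_eq (addKr u)) in h2'.
  rewrite -val_eqE /=; apply/eqP; rewrite ebt ews.
  have : t == s by rewrite (pm_lemma hs ht) h2'.
  by move/eqP => ->; congr (_, _); ring.
move: (congr1 val e) => /= [e1 e2]; subst b2.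
apply/andP; split; first exact: eqxx.
apply/negP => /eqP/(congr1 val) /= [e3].
rewrite e1 ews' ews in e3.
move/eqP: e3; rewrite (can_eq (addKr u)).
by have := pm_lemma hs hs; rewrite eqxx => /esym/negP h /h.
Qed.

Lemma stepE (v : A -> algC) (a : A) : mxapply (@Ugrover _ G) v a = v (predA a).
Proof.
rewrite /mxapply (bigD1 (predA a)) //= big1 ?addr0; last first.
  by move=> b /negbTE ne; rewrite Ugrover_delta ne mul0r.
by rewrite Ugrover_delta eqxx mul1r.
Qed.

Lemma evolveE t (v : A -> algC) (a : A) : evolve t v a = v (iter t predA a).
Proof.
elim: t a => [//|t IH] a.
by rewrite /evolve iterS stepE iterSr -IH.
Qed.

Lemma tv_iter t (a : A) : tv (iter t predA a) = tv a - t%:R * (tv a - (val a).1).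
Proof.
elim: t a => [|t IH] a; first by rewrite /= mul0r subr0.
rewrite iterSr IH /tv /=.
rewrite -natr1; ring.
Qed.

Lemma vstateE (x : Z) (a : A) : vstate G x a = (x == tv a)%:R * k.
Proof. by rewrite /vstate bdE rmorphM rmorph_nat; congr (_ * _); exact: k_conj. Qed.


Lemma k_neq0 : k != 0.
Proof. by rewrite /k invr_eq0 sqrtC_eq0 pnatr_eq0. Qed.

Lemma arc_sE (a : A) : let s := tv a - (val a).1 in (s == 1) || (s == -1).
Proof. exact: (valP a). Qed.

Lemma pst_arc (x y : Z) tau : PST (vstate G x) (vstate G y) tau ->
  forall a : A, y = tv a -> x = tv a - tau%:R * (tv a - (val a).1).
Proof.
move=> [_ [g [ng h]]] a ey.
have := h a; rewrite evolveE vstateE tv_iter vstateE ey eqxx mul1r.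
case: eqP => // _; rewrite mul0r => /esym /eqP.
rewrite mulf_eq0 (negbTE k_neq0) orbF => /eqP g0.
by move: ng; rewrite g0 normr0 => /eqP; rewrite eq_sym oner_eq0.
Qed.

Lemma adj_m1 (y : Z) : G (y - 1) y.
Proof. by rewrite adjE; have -> : y - (y - 1) = 1 by ring. Qed.

Lemma adj_p1 (y : Z) : G (y + 1) y.
Proof. rewrite adjE; have -> : y - (y + 1) = -1 by ring.
by rewrite eqxx orbT. Qed.

Lemma pst_nec (x y : Z) tau : PST (vstate G x) (vstate G y) tau ->
  x = y - tau%:R /\ x = y + tau%:R.
Proof.
move=> P; split.
  have := @pst_arc _ _ _ P (@exist _ (fun p : Z * Z => G p.1 p.2) (y - 1, y) (adj_m1 y)) erefl.
  by rewrite /tv /= => ->; ring.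
have := @pst_arc _ _ _ P (@exist _ (fun p : Z * Z => G p.1 p.2) (y + 1, y) (adj_p1 y)) erefl.
by rewrite /tv /= => ->; ring.
Qed.

End Cyc.


Theorem theorem5p1 (n : nat) (hn : (3 <= n)%N) :
  (odd n ->
     forall (x y : 'Z_n) (tau : nat), x != y ->
       ~ PST (vstate (cycle_graph n) x) (vstate (cycle_graph n) y) tau) /\
  (forall l : nat, n = (l.*2)%N ->
     forall x : 'Z_n,
       PST (vstate (cycle_graph n) x) (vstate (cycle_graph n) (x + l%:R)) l /\
       (forall tau : nat, (tau < l)%N ->
          ~ PST (vstate (cycle_graph n) x) (vstate (cycle_graph n) (x + l%:R)) tau)).
Proof.
case: n hn => [|[|[|m]]] // _.
split.
  move=> odd_n x y tau nxy /pst_nec [e1 e2].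
  have : (tau.*2)%:R == (0 : 'Z_(m.+3)).
    rewrite -addnn natrD.
    have h : (tau%:R + tau%:R : 'Z_(m.+3)) = (y + tau%:R) - (y - tau%:R) by ring.
    by rewrite h -e1 -e2 subrr.
  rewrite natZ0 -muln2 Gauss_dvdl ?coprimen2 // -natZ0 => /eqP t0.
  by move: nxy; rewrite e1 t0 subr0 eqxx.
move=> l hl x; split.
  split; first lia.
  exists 1; split; first exact: normr1.
  move=> a; rewrite evolveE !vstateE tv_iter mul1r.
  congr (_%:R * _); congr nat_of_bool.
  have ll : (l%:R : 'Z_(m.+3)) + l%:R = 0.
    by rewrite -natrD addnn -hl; apply/eqP; rewrite natZ0.
  have nl : - (l%:R) = l%:R :> 'Z_(m.+3) by rewrite -[LHS]add0r -ll addrK.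
  move: (arc_sE a) => /=; case/orP => /eqP ->.
    by rewrite mulr1 eq_sym subr_eq eq_sym.
  by rewrite mulrN1 nl eq_sym subr_eq eq_sym.
move=> tau ltl /pst_nec [e1 _].
have : ((l - tau)%:R : 'Z_(m.+3)) == 0.
  rewrite (natrB _ (ltnW ltl)).
  have h : (l%:R - tau%:R : 'Z_(m.+3)) = (x + l%:R - tau%:R) - x by ring.
  by rewrite h -e1 subrr.
rewrite natZ0 => /dvdn_leq; rewrite subn_gt0 ltl => /(_ isT).
lia.
Qed.
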